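(* Let $A$ be an ideal of $D$ such that $A=(I_1I_2\cdots I_m)^{\ast}$ for some finitely many $\ast$-homog ideals $I_1,\dots,I_m$. Then $A=(J_1J_2\cdots J_r)^\ast$ for some $\ast$-homog ideals $J_1,\dots,J_r$ that are mutually $\ast$-comaximal, and this expression is unique up to order: if also $A=(K_1\cdots K_s)^\ast$ with $K_1,\dots,K_s$ mutually $\ast$-comaximal $\ast$-homog ideals, then $r=s$ and after reordering $J_i=K_i$ for all $i$.
   Context: $D$ is an integral domain and $\ast$ is a star operation on $D$ of finite character. A $\ast$-ideal is a nonzero fractional ideal $I$ with $I^\ast=I$; it is of finite type if $I=J^\ast$ for some nonzero finitely generated $J$. A maximal $\ast$-ideal is an integral $\ast$-ideal maximal among proper integral $\ast$-ideals. Ideals $A,B$ are $\ast$-comaximal if $(A+B)^\ast=D$. A $\ast$-homog ideal of $D$ is an integral $\ast$-ideal $I$ of finite type with $I\subsetneq D$ such that $(J+L)^{\ast}\neq D$ for every pair $J,L$ of proper integral $\ast$-ideals of finite type containing $I$. *)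

(* Defs.v *)
(* D : idomainType, K := {fraction D} its quotient field.
   Subsets of K are predicates K -> Prop (compared with Leibniz equality;
   functional/propositional extensionality are available). *)
From Stdlib Require Import Permutation.
From HB Require Import structures.
From mathcomp Require Import all_boot all_order all_algebra.
From mathcomp Require Import fraction.
Set Implicit Arguments. Unset Strict Implicit. Unset Printing Implicit Defensive.
Import GRing.Theory.
Local Open Scope ring_scope.

Section StarDefs.
Variable D : idomainType.
Local Notation K := {fraction D}.
Local Notation emb := (@FracField.tofrac D).

Definition kset := K -> Prop.

Definition ksubset (I J : kset) : Prop := forall x, I x -> J x.

Definition Dset : kset := fun y => exists a : D, y = emb a.

Definition submodule (I : kset) : Prop :=
  [/\ I 0, (forall x y, I x -> I y -> I (x + y))
    & (forall (a : D) x, I x -> I (emb a * x))].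

Definition frac_ideal (I : kset) : Prop :=
  [/\ submodule I, (exists x, I x /\ x != 0)
    & exists d : D, d != 0 /\ forall x, I x -> Dset (emb d * x)].

Definition integral (I : kset) : Prop := ksubset I Dset.

Definition principal (x : K) : kset := fun y => exists a : D, y = emb a * x.

Definition kscale (x : K) (I : kset) : kset := fun y => exists z, I z /\ y = x * z.

Definition gen (s : seq K) : kset :=
  fun y => exists f : nat -> D, y = \sum_(i < size s) emb (f i) * s`_i.

Definition fg_ideal (J : kset) : Prop :=
  exists s : seq K, J = gen s /\ exists x, J x /\ x != 0.

Definition isum (I J : kset) : kset := fun y => exists a b, [/\ I a, J b & y = a + b].
Definition iprod (I J : kset) : kset :=
  fun y => exists s : seq (K * K),
    (forall p, List.In p s -> I p.1 /\ J p.2) /\ y = \sum_(p <- s) p.1 * p.2.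
Definition iprodl (l : seq kset) : kset := foldr iprod Dset l.

Definition star_op (star : kset -> kset) : Prop :=
  (forall I, frac_ideal I -> frac_ideal (star I)) /\
  [/\ (forall x, x != 0 -> star (principal x) = principal x),
      (forall x I, x != 0 -> frac_ideal I -> star (kscale x I) = kscale x (star I)),
      (forall I, frac_ideal I -> ksubset I (star I)),
      (forall I J, frac_ideal I -> frac_ideal J -> ksubset I J ->
                   ksubset (star I) (star J))
    & (forall I, frac_ideal I -> star (star I) = star I)].

Definition finite_character (star : kset -> kset) : Prop :=
  forall I, frac_ideal I ->
    star I = (fun y => exists J, [/\ fg_ideal J, ksubset J I & star J y]).

Variable star : kset -> kset.

Definition star_ideal (I : kset) : Prop := frac_ideal I /\ star I = I.

Definition finite_type (I : kset) : Prop :=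
  star_ideal I /\ exists J, fg_ideal J /\ I = star J.

Definition proper_integral (I : kset) : Prop := integral I /\ I <> Dset.

Definition star_comax (A B : kset) : Prop := star (isum A B) = Dset.

Definition star_homog (I : kset) : Prop :=
  [/\ star_ideal I, integral I, finite_type I, I <> Dset &
     forall J L, star_ideal J -> star_ideal L -> finite_type J -> finite_type L ->
       proper_integral J -> proper_integral L -> ksubset I J -> ksubset I L ->
       star (isum J L) <> Dset].

Definition mutually_comax (l : seq kset) : Prop :=
  forall i j, (i < size l)%N -> (j < size l)%N -> i <> j ->
    star_comax (nth Dset l i) (nth Dset l j).

End StarDefs.

(* Main.v *)
Require Import Defs.
From Stdlib Require Import Permutation List.
From Stdlib Require Import FunctionalExtensionality PropExtensionality Classical.
From HB Require Import structures.
From mathcomp Require Import all_boot all_order all_algebra.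
From mathcomp Require Import fraction generic_quotient.
From mathcomp Require Import ring.
Set Implicit Arguments. Unset Strict Implicit. Unset Printing Implicit Defensive.
Import GRing.Theory.
Local Open Scope ring_scope.

Section Basic.
Variable D : idomainType.
Local Notation K := {fraction D}.
Local Notation emb := (@FracField.tofrac D).
Local Notation kset := (kset D).
Implicit Types (I J L X : kset) (x y z : K) (s t : seq K).

Lemma kext (I J : kset) : (forall x, I x <-> J x) -> I = J.
Proof.
move=> H; apply: functional_extensionality => x.
by apply: propositional_extensionality.
Qed.

Lemma ksub_antisym (I J : kset) : ksubset I J -> ksubset J I -> I = J.
Proof. by move=> h1 h2; apply: kext => x; split; [apply: h1|apply: h2]. Qed.

Lemma denom_ex (x : K) : exists d : D, d != 0 /\ Dset (emb d * x).
Proof.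
elim/quotW: x => r; exists (frac r).2; split; first exact: denom_ratioP.
exists (frac r).1.
rewrite [emb _]piE [emb (frac r).1]piE -[_ * _]/(FracField.mul _ _) -FracField.pi_mul.
apply/eqmodP; rewrite /= FracField.equivfE.
rewrite /FracField.mulf !numden_Ratio ?mulf_neq0 ?oner_eq0 ?denom_ratioP //.
by rewrite mulr1 mul1r mulrC.


Qed.

Lemma DsetE (a : D) : Dset (emb a). Proof. by exists a. Qed.
Lemma Dset0 : Dset (0 : K). Proof. by exists 0; rewrite rmorph0. Qed.
Lemma Dset1 : Dset (1 : K). Proof. by exists 1; rewrite rmorph1. Qed.
Lemma DsetD (x y : K) : Dset x -> Dset y -> Dset (x + y).
Proof. by move=> [a ->] [b ->]; exists (a + b); rewrite rmorphD. Qed.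
Lemma DsetM (x y : K) : Dset x -> Dset y -> Dset (x * y).
Proof. by move=> [a ->] [b ->]; exists (a * b); rewrite rmorphM. Qed.
Lemma Dset_sm : submodule (@Dset D).
Proof.
split; first exact: Dset0; first exact: DsetD.
by move=> a x hx; apply: DsetM => //; exact: DsetE.
Qed.

Section SM.
Variable I : kset.
Hypothesis hI : submodule I.
Lemma sm0 : I 0. Proof. by case: hI. Qed.
Lemma smD x y : I x -> I y -> I (x + y). Proof. by case: hI => _ h _; apply: h. Qed.
Lemma smM x y : Dset y -> I x -> I (y * x).
Proof. by case: hI => _ _ h [a ->]; apply: h. Qed.
Lemma smM' x y : Dset y -> I x -> I (x * y).
Proof. by rewrite mulrC; apply: smM. Qed.
End SM.

Definition iid (I : kset) := [/\ submodule I, integral I & exists x, I x /\ x != 0].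
Definition smi (I : kset) := submodule I /\ integral I.

Lemma iid_smi I : iid I -> smi I. Proof. by case. Qed.

Lemma iid_frac I : iid I -> frac_ideal I.
Proof.
case=> h1 h2 h3; split => //; exists 1; split; first exact: oner_neq0.
by move=> x /h2; rewrite rmorph1 mul1r.
Qed.

Lemma Dset_iid : iid (@Dset D).
Proof.
split; [exact: Dset_sm| by [] |]; exists 1; split; [exact: Dset1|exact: oner_neq0].
Qed.

Lemma isum_sm I J : submodule I -> submodule J -> submodule (isum I J).
Proof.
move=> hI hJ; split.
- by exists 0, 0; rewrite addr0; split => //; apply: sm0.
- move=> x y [a [b [ha hb ->]]] [a' [b' [ha' hb' ->]]].
  exists (a + a'), (b + b'); split; try by apply: smD.
  by rewrite addrACA.
- move=> c x [a [b [ha hb ->]]]; exists (emb c * a), (emb c * b); split.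
  + by apply: smM => //; apply: DsetE.
  + by apply: smM => //; apply: DsetE.
  + by rewrite mulrDr.
Qed.

Lemma isum_int I J : integral I -> integral J -> integral (isum I J).
Proof. by move=> hI hJ x [a [b [/hI ha /hJ hb ->]]]; apply: DsetD. Qed.

Lemma isum_l I J : J 0 -> ksubset I (isum I J).
Proof. by move=> h x hx; exists x, 0; rewrite addr0. Qed.
Lemma isum_r I J : I 0 -> ksubset J (isum I J).
Proof. by move=> h x hx; exists 0, x; rewrite add0r. Qed.

Lemma isum_iid I J : iid I -> smi J -> iid (isum I J).
Proof.
case=> h1 h2 [x [hx nx]] [h3 h4]; split; [exact: isum_sm|exact: isum_int|].
by exists x; split => //; apply: isum_l => //; apply: sm0.
Qed.

Lemma isum_min X I J : submodule X -> ksubset I X -> ksubset J X -> ksubset (isum I J) X.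
Proof. by move=> hX h1 h2 y [a [b [/h1 ha /h2 hb ->]]]; apply: smD. Qed.

Lemma isumC I J : isum I J = isum J I.
Proof.
by apply: kext => y; split => -[a [b [ha hb ->]]]; exists b, a; rewrite addrC.
Qed.

Lemma isum_mono I I' J J' : ksubset I I' -> ksubset J J' -> ksubset (isum I J) (isum I' J').
Proof. by move=> h1 h2 y [a [b [ha hb ->]]]; exists a, b; split; [apply: h1|apply: h2|]. Qed.

Lemma iprod_ind I J (P : kset) : P 0 -> (forall x y, P x -> P y -> P (x + y)) ->
  (forall a b, I a -> J b -> P (a * b)) -> ksubset (iprod I J) P.
Proof.
move=> P0 PD Pm y [s [hs ->]]; elim: s hs => [|p s IH] hs; first by rewrite big_nil.
rewrite big_cons; apply: PD.
- by have [h1 h2] := hs p (or_introl erefl); apply: Pm.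
- by apply: IH => q hq; apply: hs; right.
Qed.

Lemma iprod_in I J a b : I a -> J b -> iprod I J (a * b).
Proof.
move=> ha hb; exists [:: (a, b)]; split; last by rewrite big_seq1.
by move=> p [<-|[]].
Qed.

Lemma iprod0 I J : iprod I J 0.
Proof. by exists [::]; split => //; rewrite big_nil. Qed.

Lemma iprodD I J x y : iprod I J x -> iprod I J y -> iprod I J (x + y).
Proof.
move=> hx hy; case: hx => s [hs Hx]; case: hy => t [ht Hy]; exists (s ++ t); split; last by rewrite Hx Hy big_cat.
by move=> p hp; case: (in_app_or s t p hp) => h; [exact: hs|exact: ht].
Qed.

Lemma iprod_sm I J : submodule I -> submodule (iprod I J).
Proof.
move=> hI; split; [exact: iprod0|exact: iprodD|].
move=> c x hx.
suff: (fun y => forall c, iprod I J (emb c * y)) x by apply.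
move: x hx; apply: iprod_ind.
- by move=> c'; rewrite mulr0; apply: iprod0.
- by move=> x y hx hy c'; rewrite mulrDr; apply: iprodD.
- move=> a b ha hb c'; rewrite mulrA; apply: iprod_in => //.
  by apply: smM => //; apply: DsetE.
Qed.

Lemma iprod_int I J : integral I -> integral J -> integral (iprod I J).
Proof.
move=> hI hJ; apply: iprod_ind; [exact: Dset0|exact: DsetD|].
by move=> a b /hI ha /hJ hb; apply: DsetM.
Qed.

Lemma iprod_iid I J : iid I -> iid J -> iid (iprod I J).
Proof.
case=> h1 h2 [x [hx nx]] [h3 h4 [y [hy ny]]]; split.
- exact: iprod_sm.
- exact: iprod_int.
- by exists (x * y); split; [apply: iprod_in|apply: mulf_neq0].
Qed.

Lemma iprod_mono I I' J J' : ksubset I I' -> ksubset J J' ->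
  ksubset (iprod I J) (iprod I' J').
Proof.
move=> h1 h2; apply: iprod_ind; [exact: iprod0|exact: iprodD|].
by move=> a b ha hb; apply: iprod_in; [apply: h1|apply: h2].
Qed.

Lemma iprodC I J : iprod I J = iprod J I.
Proof.
suff H : forall I J, ksubset (iprod I J) (iprod J I).
  by apply: ksub_antisym; apply: H.
move=> I0 J0; apply: iprod_ind; [exact: iprod0|exact: iprodD|].
by move=> a b ha hb; rewrite mulrC; apply: iprod_in.
Qed.

Lemma iprodA_sub I J L : ksubset (iprod (iprod I J) L) (iprod I (iprod J L)).
Proof.
apply: iprod_ind; [exact: iprod0|exact: iprodD|].
move=> p q hp hq.
suff: (fun p => iprod I (iprod J L) (p * q)) p by apply.
move: p hp; apply: iprod_ind.
- by rewrite mul0r; apply: iprod0.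
- by move=> x y hx hy; rewrite mulrDl; apply: iprodD.
- by move=> a b ha hb; rewrite -mulrA; apply: iprod_in => //; apply: iprod_in.
Qed.

Lemma iprodA I J L : iprod (iprod I J) L = iprod I (iprod J L).
Proof.
apply: ksub_antisym; first exact: iprodA_sub.
move=> y hy; rewrite iprodC in hy; have {hy}hy := iprodA_sub hy.
rewrite iprodC in hy; have {hy}hy := iprodA_sub hy.
by rewrite iprodC.
Qed.

Lemma iprod_subl I J : submodule I -> integral J -> ksubset (iprod I J) I.
Proof.
move=> hI hJ; apply: iprod_ind; [exact: sm0|exact: smD|].
by move=> a b ha /hJ hb; apply: smM'.
Qed.

Lemma iprod_subr I J : integral I -> submodule J -> ksubset (iprod I J) J.
Proof. by move=> hI hJ; rewrite iprodC; apply: iprod_subl. Qed.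

Lemma iprod_Dl J : ksubset J (iprod (@Dset D) J).
Proof. by move=> x hx; rewrite -[x]mul1r; apply: iprod_in => //; apply: Dset1. Qed.
Lemma iprod_Dr J : ksubset J (iprod J (@Dset D)).
Proof. by move=> x hx; rewrite -[x]mulr1; apply: iprod_in => //; apply: Dset1. Qed.

Lemma gen_nil y : gen [::] y <-> y = 0.
Proof.
split; first by move=> [f ->]; rewrite big_ord0.
by move=> ->; exists (fun _ => 0); rewrite big_ord0.
Qed.

Lemma gen_cons x s y : gen (x :: s) y <-> exists a r, gen s r /\ y = emb a * x + r.
Proof.
split.
- move=> [f ->]; exists (f 0%N), (\sum_(i < size s) emb (f i.+1) * s`_i); split.
  + by exists (fun i => f i.+1).
  + by rewrite /= big_ord_recl.
- move=> [a [r [[f ->] ->]]]; exists (fun i => if i is j.+1 then f j else a).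
  by rewrite /= big_ord_recl.
Qed.

Lemma gen_sm s : submodule (gen s).
Proof.
elim: s => [|x s [h0 hD hM]].
  split; first by apply/gen_nil.
  - by move=> x y /gen_nil -> /gen_nil ->; apply/gen_nil; rewrite addr0.
  - by move=> a x /gen_nil ->; apply/gen_nil; rewrite mulr0.
split.
- by apply/gen_cons; exists 0, 0; rewrite rmorph0 mul0r addr0.
- move=> y z /gen_cons [a [r [hr ->]]] /gen_cons [b [r' [hr' ->]]].
  apply/gen_cons; exists (a + b), (r + r'); split; first exact: hD.
  by rewrite rmorphD mulrDl addrACA.
- move=> c y /gen_cons [a [r [hr ->]]]; apply/gen_cons.
  exists (c * a), (emb c * r); split; first exact: hM.
  by rewrite rmorphM mulrDr mulrA.
Qed.

Lemma gen_in s x : List.In x s -> gen s x.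
Proof.
elim: s => [|y s IH] //= [<-|hx]; apply/gen_cons.
- by exists 1, 0; split; [apply: sm0; apply: gen_sm|rewrite rmorph1 mul1r addr0].
- by exists 0, x; split; [apply: IH|rewrite rmorph0 mul0r add0r].
Qed.

Lemma gen_min X s : submodule X -> (forall x, List.In x s -> X x) -> ksubset (gen s) X.
Proof.
move=> hX; elim: s => [|x s IH] hs y.
  by move/gen_nil => ->; apply: sm0.
move/gen_cons => [a [r [hr ->]]]; apply: smD => //.
- by apply: smM => //; [apply: DsetE|apply: hs; left].
- by apply: IH => // z hz; apply: hs; right.
Qed.

Lemma gen_app s t : gen (s ++ t) = isum (gen s) (gen t).
Proof.
apply: ksub_antisym.
- apply: gen_min; first by apply: isum_sm; apply: gen_sm.
  move=> x hx; case: (in_app_or _ _ _ hx) => h.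
  + by apply: isum_l; [apply: sm0; apply: gen_sm|apply: gen_in].
  + by apply: isum_r; [apply: sm0; apply: gen_sm|apply: gen_in].
- apply: isum_min; first exact: gen_sm.
  + by apply: gen_min; [apply: gen_sm|move=> x hx; apply: gen_in; apply: in_or_app; left].
  + by apply: gen_min; [apply: gen_sm|move=> x hx; apply: gen_in; apply: in_or_app; right].
Qed.

Lemma gen_principal x : principal x = gen [:: x].
Proof.
apply: kext => y; split.
- by move=> [a ->]; apply/gen_cons; exists a, 0; split; [apply/gen_nil|rewrite addr0].
- by move/gen_cons => [a [r [/gen_nil -> ->]]]; exists a; rewrite addr0.
Qed.

Lemma gen_denom s : exists d : D, d != 0 /\ forall y, gen s y -> Dset (emb d * y).
Proof.
elim: s => [|x s [d [nd hd]]].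
  by exists 1; split; [apply: oner_neq0|move=> y /gen_nil ->; rewrite mulr0; apply: Dset0].
have [e [ne he]] := denom_ex x.
exists (e * d); split; first by apply: mulf_neq0.
move=> y /gen_cons [a [r [hr ->]]]; rewrite mulrDr; apply: DsetD.
- rewrite rmorphM [emb e * _]mulrC mulrACA; apply: DsetM => //.
  by apply: DsetM; apply: DsetE.
- rewrite rmorphM -mulrA; apply: DsetM; [exact: DsetE|exact: hd].
Qed.

Lemma gen_frac s : (exists x, gen s x /\ x != 0) -> frac_ideal (gen s).
Proof. by move=> h; split => //; [apply: gen_sm|apply: gen_denom]. Qed.

Fixpoint pprod (s t : seq K) : seq K :=
  if s is x :: s' then map (fun y => x * y) t ++ pprod s' t else [::].

Lemma pprod_in s t z : List.In z (pprod s t) ->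
  exists x y, [/\ List.In x s, List.In y t & z = x * y].
Proof.
elim: s => [|x s IH] //= hz; case: (in_app_or _ _ _ hz).
  by move=> /in_map_iff [y [<- hy]]; exists x, y; split => //; left.
move=> /IH [x' [y [h1 h2 ->]]].
by exists x', y; split => //; right.
Qed.

Lemma pprod_in2 s t x y : List.In x s -> List.In y t -> List.In (x * y) (pprod s t).
Proof.
elim: s => [|x' s IH] //= [<-|hx] hy; apply: in_or_app.
- by left; apply: in_map.
- by right; apply: IH.
Qed.

Lemma gen_pprod s t : gen (pprod s t) = iprod (gen s) (gen t).
Proof.
apply: ksub_antisym.
- apply: gen_min; first by apply: iprod_sm; apply: gen_sm.
  by move=> z /pprod_in [x [y [hx hy ->]]]; apply: iprod_in; apply: gen_in.
- apply: iprod_ind; [apply: sm0; apply: gen_sm|apply: smD; apply: gen_sm|].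
  move=> a b ha hb.
  suff: (fun a => forall b, gen t b -> gen (pprod s t) (a * b)) a by apply.
  move: a ha; apply: gen_min.
  + split.
    * by move=> b' _; rewrite mul0r; apply: sm0; apply: gen_sm.
    * by move=> x y hx hy b' hb'; rewrite mulrDl; apply: smD; [apply: gen_sm|apply: hx|apply: hy].
    * move=> c x hx b' hb'; rewrite -mulrA; apply: smM; [apply: gen_sm|apply: DsetE|by apply: hx].
  + move=> x hx b' hb'.
    suff: (fun b => gen (pprod s t) (x * b)) b' by apply.
    move: b' hb'; apply: gen_min.
    * split.
      - by rewrite mulr0; apply: sm0; apply: gen_sm.
      - by move=> y z hy hz; rewrite mulrDr; apply: smD => //; apply: gen_sm.
      - by move=> c y hy; rewrite mulrCA; apply: smM => //; [apply: gen_sm|apply: DsetE].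
    * by move=> y hy; apply: gen_in; apply: pprod_in2.
Qed.

End Basic.

Section Star.
Variable D : idomainType.
Local Notation K := {fraction D}.
Local Notation emb := (@FracField.tofrac D).
Local Notation kset := (kset D).
Implicit Types (I J L X : kset) (x y z : K) (s t : seq K).
Local Notation DD := (@Dset D).
Variable star : kset -> kset.
Hypothesis Hstar : star_op star.

Lemma Dset_principal : @Dset D = principal 1.
Proof.
by apply: kext => y; split => -[a ->]; exists a; rewrite ?mulr1.
Qed.

Lemma star_D : star DD = DD.
Proof.
case: Hstar => _ [hp _ _ _ _]; rewrite Dset_principal; apply: hp; exact: oner_neq0.
Qed.

Lemma star_ext I : iid I -> ksubset I (star I).
Proof. by case: Hstar => _ [_ _ h _ _] /iid_frac; apply: h. Qed.

Lemma star_mono I J : iid I -> iid J -> ksubset I J -> ksubset (star I) (star J).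
Proof. by case: Hstar => _ [_ _ _ h _] /iid_frac h1 /iid_frac h2; apply: h. Qed.

Lemma star_idem I : iid I -> star (star I) = star I.
Proof. by case: Hstar => _ [_ _ _ _ h] /iid_frac; apply: h. Qed.

Lemma star_int I : iid I -> ksubset (star I) DD.
Proof.
move=> hI y hy; rewrite -star_D; apply: star_mono hy => //; first exact: Dset_iid.
by case: hI.
Qed.

Lemma star_iid I : iid I -> iid (star I).
Proof.
move=> hI; case: Hstar => hf _; have [h1 h2 h3] := hf _ (iid_frac hI).
by split => //; apply: star_int.
Qed.

Lemma star_min I X : iid I -> iid X -> star X = X -> ksubset I X -> ksubset (star I) X.
Proof. by move=> hI hX hs hIX; rewrite -hs; apply: star_mono. Qed.

Lemma kscale_iid a J : Dset a -> a != 0 -> iid J -> iid (kscale a J).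
Proof.
move=> ha na [hs hi [x [hx nx]]]; split.
- split.
  + by exists 0; split; [apply: sm0|rewrite mulr0].
  + move=> y y' [z [hz ->]] [z' [hz' ->]]; exists (z + z'); split; last by rewrite mulrDr.
    exact: smD.
  + move=> c y [z [hz ->]]; exists (emb c * z); split; last by rewrite mulrCA.
    by apply: smM => //; apply: DsetE.
- by move=> y [z [/hi hz ->]]; apply: DsetM.
- by exists (a * x); split; [exists x|apply: mulf_neq0].
Qed.

Lemma starM_sub I J : iid I -> iid J -> ksubset (iprod I (star J)) (star (iprod I J)).
Proof.
move=> hI hJ; have hIJ := iprod_iid hI hJ; have [hs _ _] := star_iid hIJ.
apply: iprod_ind; [exact: sm0|exact: smD|].
move=> a b ha hb; have [/eqP ->|na] := boolP (a == 0).
  by rewrite mul0r; apply: sm0.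
have hDa : Dset a by case: hI => _ hi _; apply: hi.
case: Hstar => _ [_ hsc _ _ _].
have : kscale a (star J) (a * b) by exists b.
rewrite -hsc //; last exact: iid_frac.
apply: star_mono => //; first exact: kscale_iid.
by move=> y [z [hz ->]]; apply: iprod_in.
Qed.

Lemma starM_r I J : iid I -> iid J -> star (iprod I (star J)) = star (iprod I J).
Proof.
move=> hI hJ; have hIJ := iprod_iid hI hJ; have hIJ' := iprod_iid hI (star_iid hJ).
apply: ksub_antisym.
- apply: star_min => //; [exact: star_iid|exact: star_idem|exact: starM_sub].
- apply: star_mono => //; apply: iprod_mono => //; exact: star_ext.
Qed.

Lemma starM_l I J : iid I -> iid J -> star (iprod (star I) J) = star (iprod I J).
Proof. by move=> hI hJ; rewrite iprodC starM_r // iprodC. Qed.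

Lemma starS_l I J : iid I -> smi J -> star (isum (star I) J) = star (isum I J).
Proof.
move=> hI hJ; have hIJ := isum_iid hI hJ; have hIJ' := isum_iid (star_iid hI) hJ.
have [hs _ _] := star_iid hIJ; case: (hJ) => hJs _.
apply: ksub_antisym.
- apply: star_min => //; [exact: star_iid|exact: star_idem|].
  apply: isum_min => //.
  + apply: star_mono => //; apply: isum_l; exact: sm0.
  + move=> y hy; apply: star_ext => //; apply: isum_r => //; apply: sm0; by case: hI.
- apply: star_mono => //; apply: isum_mono => //; exact: star_ext.
Qed.

Lemma star_ne I J : iid I -> iid J -> ksubset I J -> star J <> DD -> star I <> DD.
Proof.
move=> hI hJ hIJ hne hD; apply: hne; apply: ksub_antisym; first exact: star_int.
by rewrite -hD; apply: star_mono.
Qed.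

End Star.

Section Homog.
Variable D : idomainType.
Local Notation K := {fraction D}.
Local Notation emb := (@FracField.tofrac D).
Local Notation kset := (kset D).
Local Notation DD := (@Dset D).
Implicit Types (I J L X : kset) (x y z : K) (s t : seq K).
Variable star : kset -> kset.
Hypothesis Hstar : star_op star.
Hypothesis Hfc : finite_character star.
Local Notation homog := (star_homog star).

Lemma gen_smi s : (forall x, List.In x s -> Dset x) -> smi (gen s).
Proof. by move=> h; split; [apply: gen_sm|apply: gen_min => //; apply: (Dset_sm D)]. Qed.

Lemma homog_iid I : homog I -> iid I.
Proof. by case=> [[[h1 h2 _] _] h3 _ _ _]. Qed.

Lemma homog_star I : homog I -> star I = I.
Proof. by case=> [[_ ->]]. Qed.

Lemma homog_neD I : homog I -> I <> DD.
Proof. by case. Qed.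

Lemma homog_sneD I : homog I -> star I <> DD.
Proof. by move=> h; rewrite homog_star //; apply: homog_neD. Qed.

Lemma homog_gen I : homog I -> exists s0, iid (gen s0) /\ I = star (gen s0).
Proof.
move=> h; have hi := homog_iid h; case: h => _ _ [_ [J [[s0 [-> hnz]] hI]]] _ _.
exists s0; split => //; split; [exact: gen_sm| |by []].
have hf := gen_frac hnz; case: Hstar => _ [_ _ he _ _].
move=> y /(he _ hf); rewrite -hI; case: hi => _ hi _; apply: hi.
Qed.

Lemma ftS I t : homog I -> (forall x, List.In x t -> Dset x) ->
  star (isum I (gen t)) <> DD ->
  [/\ star_ideal star (star (isum I (gen t))), finite_type star (star (isum I (gen t))),
      proper_integral (star (isum I (gen t))) & ksubset I (star (isum I (gen t)))].
Proof.
move=> hI ht hne; have iI := homog_iid hI; have st := gen_smi ht.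
have iS := isum_iid iI st; have iSS := star_iid Hstar iS.
have sI : star_ideal star (star (isum I (gen t))).
  by split; [exact: iid_frac|exact: star_idem].
split => //.
- split => //; have [s0 [hg ->]] := homog_gen hI.
  exists (gen (s0 ++ t)); split.
  + exists (s0 ++ t); split => //; case: hg => _ _ [x [hx nx]]; exists x; split => //.
    by rewrite gen_app; apply: isum_l => //; apply: sm0; apply: gen_sm.
  + by rewrite starS_l // gen_app.
- by split => //; apply: star_int.
- move=> y hy; apply: star_ext => //; apply: isum_l => //; apply: sm0; apply: gen_sm.
Qed.

Definition Mset I : kset := fun x => Dset x /\ star (isum I (principal x)) <> DD.

Lemma Mset_D I x : Mset I x -> Dset x. Proof. by case. Qed.

Lemma Mset_fg I t : homog I -> (forall x, List.In x t -> Mset I x) ->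
  star (isum I (gen t)) <> DD.
Proof.
move=> hI; have iI := homog_iid hI.
elim: t => [|x t IH] ht.
  apply: (star_ne Hstar _ iI); last exact: homog_sneD.
  - by apply: isum_iid => //; apply: gen_smi.
  - apply: isum_min; [by case: iI| by []|].
    by move=> y /gen_nil ->; apply: sm0; case: iI.
have [hx hMx] := ht x (or_introl erefl).
have htD : forall y, List.In y t -> Dset y by move=> y hy; apply: Mset_D; apply: ht; right.
have hne := IH (fun y hy => ht y (or_intror hy)).
have hxt : forall y, List.In y [:: x] -> Dset y by move=> y [<-|[]].
rewrite gen_principal in hMx.
have [s1 f1 p1 e1] := ftS hI hxt hMx.
have [s2 f2 p2 e2] := ftS hI htD hne.
case: (hI) => _ _ _ _ hc.
have := hc _ _ s1 s2 f1 f2 p1 p2 e1 e2.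
have i1 := star_iid Hstar (isum_iid iI (gen_smi hxt)).
have i2 := star_iid Hstar (isum_iid iI (gen_smi htD)).
have hxtD : forall y, List.In y (x :: t) -> Dset y by move=> y [<-|hy]; [|apply: htD].
apply: star_ne => //.
- by apply: isum_iid => //; apply: gen_smi.
- by apply: isum_iid => //; apply: iid_smi.
move=> y [i [g [hi /gen_cons [a [r [hr ->]]] ->]]].
exists (i + emb a * x), r; split; last by rewrite addrA.
- apply: star_ext => //; first by apply: isum_iid => //; apply: gen_smi.
  by exists i, (emb a * x); split => //; apply/gen_cons; exists a, 0; split; [apply/gen_nil|rewrite addr0].
- apply: star_ext => //; first by apply: isum_iid => //; apply: gen_smi.
  by apply: isum_r => //; apply: sm0; case: iI.
Qed.

Lemma principal_gen x y : gen [:: x] y -> principal x y.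
Proof. by rewrite -gen_principal. Qed.

Lemma Mset_gen I t y : homog I -> (forall x, List.In x t -> Mset I x) -> gen t y -> Mset I y.
Proof.
move=> hI ht hy; have iI := homog_iid hI.
have htD : forall x, List.In x t -> Dset x by move=> x /ht; apply: Mset_D.
have yD : Dset y by apply: (gen_min (Dset_sm D) htD hy).
split => //; apply: (star_ne Hstar _ _ _ (Mset_fg hI ht)).
- by apply: isum_iid => //; rewrite gen_principal; apply: gen_smi => x [<-|[]].
- by apply: isum_iid => //; apply: gen_smi.
apply: isum_mono => //; rewrite gen_principal; apply: gen_min; first exact: gen_sm.
by move=> x [<-|[]].
Qed.

Lemma Mset_sm I : homog I -> submodule (Mset I).
Proof.
move=> hI; split.
- by apply: (Mset_gen (t := [::])) => //; apply/gen_nil.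
- move=> x y hx hy; apply: (Mset_gen (t := [:: x; y])) => //.
    by move=> z [<-|[<-|[]]].
  apply/gen_cons; exists 1, y; split; last by rewrite rmorph1 mul1r.
  by apply/gen_cons; exists 1, 0; rewrite rmorph1 mul1r addr0; split => //; apply/gen_nil.
- move=> c x hx; apply: (Mset_gen (t := [:: x])) => //; first by move=> z [<-|[]].
  by apply/gen_cons; exists c, 0; rewrite addr0; split => //; apply/gen_nil.
Qed.

Lemma Mset_sub I : homog I -> ksubset I (Mset I).
Proof.
move=> hI x hx; have iI := homog_iid hI; case: (iI) => sI intI _.
split; first exact: intI.
have hxD : forall y, List.In y [:: x] -> Dset y by move=> y [<-|[]]; apply: intI.
apply: (star_ne Hstar _ iI _ (homog_sneD hI)).
- by apply: isum_iid => //; rewrite gen_principal; apply: gen_smi.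
apply: isum_min; try done.
by move=> y [a ->]; apply: smM => //; apply: DsetE.
Qed.

Lemma Mset_iid I : homog I -> iid (Mset I).
Proof.
move=> hI; split; [exact: Mset_sm| by move=> x [] |].
have [_ _ [x [hx nx]]] := homog_iid hI.
by exists x; split => //; apply: Mset_sub.
Qed.

Lemma Mset_star I : homog I -> star (Mset I) = Mset I.
Proof.
move=> hI; have iM := Mset_iid hI; have iI := homog_iid hI.
apply: ksub_antisym; last exact: star_ext.
have hfi := Hfc (iid_frac iM).
move=> y hy; rewrite hfi in hy; case: hy => J [[s [hJ hnz]] hJM hy]; subst J.
have hsM : forall x, List.In x s -> Mset I x by move=> x /gen_in /hJM.
have hsD : forall x, List.In x s -> Dset x by move=> x /hsM /Mset_D.
have ig : iid (gen s) by split => //; [apply: gen_sm|apply: (gen_min (Dset_sm D) hsD)].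
have iS := isum_iid iI (gen_smi hsD).
have yD : Dset y.
  by apply: (star_int Hstar ig).
split => //.
apply: (star_ne Hstar _ (star_iid Hstar iS)); last first.
  by rewrite star_idem //; apply: Mset_fg.
2: by apply: isum_iid => //; rewrite gen_principal; apply: gen_smi => x [<-|[]].
have hsS : submodule (star (isum I (gen s))) by case: (star_iid Hstar iS).
apply: isum_min => //.
- move=> x hx; apply: star_ext => //; apply: isum_l => //; apply: sm0; apply: gen_sm.
- move=> z [a ->]; apply: smM => //; first exact: DsetE.
  apply: (star_mono Hstar ig iS) => //.
  by apply: isum_r => //; apply: sm0; case: iI.
Qed.

Lemma Mset_ne1 I : homog I -> ~ Mset I 1.
Proof.
move=> hI [_ h]; apply: h; have iI := homog_iid hI.
have iS : iid (isum I (principal 1)).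
  by apply: isum_iid => //; rewrite gen_principal; apply: gen_smi => x [<-|[]]; apply: Dset1.
apply: ksub_antisym; first exact: star_int.
move=> y hy; apply: star_ext => //; apply: isum_r; first by case: iI => ? _ _; apply: sm0.
by rewrite -Dset_principal.
Qed.

Lemma Mset_neD I : homog I -> Mset I <> DD.
Proof. by move=> hI hM; apply: (Mset_ne1 hI); rewrite hM; apply: Dset1. Qed.

Lemma Mset_max I L : homog I -> iid L -> star L = L -> L <> DD -> ksubset I L ->
  ksubset L (Mset I).
Proof.
move=> hI iL sL nL hIL x hx; have iI := homog_iid hI.
have xD : Dset x by case: iL => _ h _; apply: h.
split => //; apply: (star_ne Hstar _ iL); last by rewrite sL.
- by apply: isum_iid => //; rewrite gen_principal; apply: gen_smi => y [<-|[]].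
apply: isum_min => //; first by case: iL.
by move=> y [a ->]; apply: smM => //; [case: iL|apply: DsetE].
Qed.

Lemma Mset_eq I J : homog I -> homog J -> ksubset I (Mset J) -> Mset I = Mset J.
Proof.
move=> hI hJ hIJ; apply: ksub_antisym.
- apply: Mset_max => //; [exact: Mset_iid|exact: Mset_star|exact: Mset_neD|].
  by move=> x /Mset_sub => h; apply: (Mset_max hI (Mset_iid hJ) (Mset_star hJ) (Mset_neD hJ) hIJ); apply: h.
- by apply: Mset_max => //; [exact: Mset_iid|exact: Mset_star|exact: Mset_neD].
Qed.


Lemma principal_smi x : Dset x -> smi (principal x).
Proof. by move=> hx; rewrite gen_principal; apply: gen_smi => y [<-|[]]. Qed.

Lemma star_DD_prod X Y : iid X -> iid Y -> star X = DD -> star Y = DD ->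
  star (iprod X Y) = DD.
Proof.
move=> iX iY sX sY; have iXY := iprod_iid iX iY.
rewrite -(starM_l Hstar iX iY) -(starM_r Hstar (star_iid Hstar iX) iY) sX sY.
have iDD := iprod_iid (Dset_iid D) (Dset_iid D).
apply: ksub_antisym; first exact: star_int.
rewrite -{1}(star_D Hstar); apply: star_mono => //; first exact: Dset_iid.
exact: iprod_Dl.
Qed.

Lemma Mset_prime I a b : homog I -> Dset a -> Dset b -> Mset I (a * b) ->
  Mset I a \/ Mset I b.
Proof.
move=> hI ha hb [_ hab]; apply: NNPP => hn; apply: hab.
have iI := homog_iid hI; case: (iI) => sI intI _.
have nA : star (isum I (principal a)) = DD.
  by apply: NNPP => h; apply: hn; left.
have nB : star (isum I (principal b)) = DD.
  by apply: NNPP => h; apply: hn; right.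
have iA := isum_iid iI (principal_smi ha).
have iB := isum_iid iI (principal_smi hb).
have iAB := isum_iid iI (principal_smi (DsetM ha hb)).
have := star_DD_prod iA iB nA nB => hP; apply: ksub_antisym; first exact: star_int.
rewrite -hP; apply: star_mono => //; first exact: iprod_iid.
have [sAB _] := iid_smi iAB.
apply: iprod_ind; [exact: sm0|exact: smD|].
move=> u v [i [p [hi [c ->] ->]]] [i' [q [hi' [e ->] ->]]].
have vD : Dset (i' + emb e * b) by apply: DsetD; [apply: intI|apply: DsetM => //; apply: DsetE].
exists (i * (i' + emb e * b) + emb c * a * i'), (emb (c * e) * (a * b)); split.
- by apply: smD => //; [apply: smM'|apply: smM => //; apply: DsetM => //; apply: DsetE].
- by exists (c * e).
- rewrite rmorphM; ring.
Qed.

Lemma noncomax_eq I J : homog I -> homog J -> star (isum I J) <> DD -> Mset I = Mset J.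
Proof.
move=> hI hJ hne; have iI := homog_iid hI; have iJ := homog_iid hJ.
have iS := isum_iid iI (iid_smi iJ).
apply: Mset_eq => //.
move=> x hx.
apply: (Mset_max hJ (star_iid Hstar iS) (star_idem Hstar iS) hne).
- move=> y hy; apply: star_ext => //; apply: isum_r => //; apply: sm0; by case: iI.
- apply: star_ext => //; apply: isum_l => //; apply: sm0; by case: iJ.
Qed.

Lemma sub_M_noncomax J R : homog J -> homog R -> ksubset R (Mset J) ->
  star (isum J R) <> DD.
Proof.
move=> hJ hR hRM; have iJ := homog_iid hJ; have iR := homog_iid hR.
apply: (star_ne Hstar _ (Mset_iid hJ)); last by rewrite Mset_star //; apply: Mset_neD.
- by apply: isum_iid => //; apply: iid_smi.
- by apply: isum_min => //; [apply: Mset_sm|apply: Mset_sub].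
Qed.

Lemma prod_homog I J : homog I -> homog J -> star (isum I J) <> DD ->
  homog (star (iprod I J)) /\ Mset (star (iprod I J)) = Mset I.
Proof.
move=> hI hJ hne; have iI := homog_iid hI; have iJ := homog_iid hJ.
have iP := iprod_iid iI iJ; have iSP := star_iid Hstar iP.
have PI : ksubset (star (iprod I J)) I.
  apply: star_min => //; first exact: homog_star.
  by apply: iprod_subl; [case: iI|case: iJ].
have hMM : Mset I = Mset J by apply: noncomax_eq.
have hP : homog (star (iprod I J)).
  split.
  - by split; [exact: iid_frac|exact: star_idem].
  - exact: star_int.
  - split; first by split; [exact: iid_frac|exact: star_idem].
    have [s0 [g0 ->]] := homog_gen hI; have [t0 [g1 ->]] := homog_gen hJ.
    exists (gen (pprod s0 t0)); split.
    + exists (pprod s0 t0); split => //; rewrite gen_pprod.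
      by case: (iprod_iid g0 g1).
    + by rewrite (starM_l Hstar g0 (star_iid Hstar g1)) (starM_r Hstar g0 g1) gen_pprod.
  - move=> h; apply: (homog_neD hI); apply: ksub_antisym; first by case: iI.
    by rewrite -h.
  - move=> L L' [fL sL] [fL' sL'] _ _ [intL nL] [intL' nL'] hPL hPL'.
    have iL : iid L by case: fL => ? ? _; split.
    have iL' : iid L' by case: fL' => ? ? _; split.
    have key : forall L, iid L -> star L = L -> L <> DD -> ksubset (star (iprod I J)) L ->
        ksubset L (Mset I).
      move=> L0 iL0 sL0 nL0 hPL0 x hx.
      have xD : Dset x by case: iL0 => _ h _; apply: h.
      have [//|hnM] := classic (Mset I x).
      have hX : star (isum I (principal x)) = DD.
        by apply: NNPP => h; apply: hnM.
      rewrite hMM; apply: (Mset_max hJ iL0 sL0 nL0) => //.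
      have iX := isum_iid iI (principal_smi xD).
      move=> y hy; rewrite -sL0.
      have : star (iprod J (star (isum I (principal x)))) y.
        by rewrite hX; apply: (star_ext Hstar); [apply: iprod_iid => //; apply: Dset_iid|apply: iprod_Dr].
      rewrite (starM_r Hstar iJ iX); apply: star_mono => //; first exact: iprod_iid.
      have [sL0' _] := iid_smi iL0.
      apply: iprod_ind; [exact: sm0|exact: smD|].
      move=> v u hv [i [p [hi [c ->] ->]]]; rewrite mulrDr; apply: smD => //.
      + apply: hPL0; apply: star_ext => //; rewrite mulrC; exact: iprod_in.
      + rewrite mulrCA; apply: smM => //; first exact: DsetE.
        apply: smM => //; by case: iJ => _ h _; apply: h.
    have h1 := key _ iL sL nL hPL; have h2 := key _ iL' sL' nL' hPL'.
    apply: (star_ne Hstar _ (Mset_iid hI)); last by rewrite Mset_star //; apply: Mset_neD.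
    + by apply: isum_iid => //; apply: iid_smi.
    + by apply: isum_min => //; apply: Mset_sm.
split => //; apply: Mset_eq => //.
by move=> x /PI; apply: Mset_sub.
Qed.

End Homog.

Section Lists.
Variable T : Type.
Variable R : T -> T -> Prop.
Hypothesis Rsym : forall x y, R x y -> R y x.

Fixpoint pw (l : seq T) : Prop :=
  if l is x :: l' then (forall y, List.In y l' -> R x y) /\ pw l' else True.

Lemma pw_perm l l' : Permutation l l' -> pw l -> pw l'.
Proof.
elim => //=.
- move=> x l1 l2 hp IH [h1 h2]; split; last exact: IH.
  by move=> y hy; apply: h1; apply: Permutation_in hy; apply: Permutation_sym.
- move=> x y l0 [h1 [h2 h3]]; split; [|split] => //.
  + move=> z hz; case: hz => [<-|hz]; first by apply: Rsym; apply: h1; left.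
    exact: h2.
  + by move=> z hz; apply: h1; right.
- by move=> l1 l2 l3 _ h1 _ h2 h; apply: h2; apply: h1.
Qed.

Lemma in_perm (x : T) l : List.In x l -> exists rest, Permutation l (x :: rest).
Proof.
move=> h; case: (in_split x l h) => l1 [l2 e]; rewrite e; exists (List.app l1 l2).
by apply: Permutation_sym; apply: Permutation_middle.
Qed.

Lemma nth_In (x0 : T) l j : (j < size l)%N -> List.In (nth x0 l j) l.
Proof. by elim: l j => [|x l IH] [|j] //= hj; [left|right; apply: IH]. Qed.

Lemma In_nth (x0 : T) l y : List.In y l -> exists j, (j < size l)%N /\ nth x0 l j = y.
Proof.
elim: l => [|x l IH] //= [<-|/IH [j [hj <-]]]; first by exists 0%N.
by exists j.+1.
Qed.

Lemma pw_nth (x0 : T) l : pw l <-> (forall i j, (i < size l)%N -> (j < size l)%N -> i <> j ->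
  R (nth x0 l i) (nth x0 l j)).
Proof.
split.
- elim: l => [|x l IH] //= [h1 h2] [|i] [|j] //= hi hj hij.
  + by apply: h1; apply: nth_In.
  + by apply: Rsym; apply: h1; apply: nth_In.
  + by apply: IH => // e; apply: hij; rewrite e.
- elim: l => [|x l IH] //= h; split.
  + move=> y /(In_nth x0) [j [hj <-]].
    by apply: (h 0%N j.+1).
  + by apply: IH => i j hi hj hij; apply: (h i.+1 j.+1) => // -[].
Qed.

Lemma pw_nodup l : (forall x, List.In x l -> ~ R x x) -> pw l -> NoDup l.
Proof.
elim: l => [|x l IH] /= hirr; first by constructor.
move=> [h1 h2]; constructor; last by apply: IH => // y hy; apply: hirr; right.
by move=> /h1; apply: hirr; left.
Qed.

End Lists.

Section Main.
Variable D : idomainType.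
Local Notation K := {fraction D}.
Local Notation emb := (@FracField.tofrac D).
Local Notation kset := (kset D).
Local Notation DD := (@Dset D).
Implicit Types (I J L X : kset) (x y z : K) (s t : seq K) (l : seq kset).
Variable star : kset -> kset.
Hypothesis Hstar : star_op star.
Hypothesis Hfc : finite_character star.
Local Notation homog := (star_homog star).
Local Notation comax := (star_comax star).
Local Notation allh l := (forall J, List.In J l -> homog J).

Lemma comax_sym I J : comax I J -> comax J I.
Proof. by rewrite /star_comax isumC. Qed.

Lemma homog_not_self J : homog J -> ~ comax J J.
Proof.
move=> hJ; have iJ := homog_iid hJ; apply: (star_ne Hstar _ iJ); last exact: homog_sneD.
- by apply: isum_iid => //; apply: iid_smi.
- by apply: isum_min => //; case: iJ.
Qed.

Lemma iprodl_perm l l' : Permutation l l' -> iprodl l = iprodl l'.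
Proof.
elim => //=.
- by move=> x l1 l2 _ ->.
- by move=> x y l0; rewrite -!iprodA (iprodC y x).
- by move=> l1 l2 l3 _ -> _ ->.
Qed.

Lemma iprodl_iid l : allh l -> iid (iprodl l).
Proof.
elim: l => [|J l IH] /= h; first exact: Dset_iid.
apply: iprod_iid; first by apply: homog_iid; apply: h; left.
by apply: IH => I hI; apply: h; right.
Qed.

Lemma exist_step I Js : homog I -> allh Js -> pw comax Js ->
  exists Js', [/\ allh Js', pw comax Js' & star (iprodl Js') = star (iprod I (iprodl Js))].
Proof.
move=> hI hJs hpw.
have [[J [inJ hne]]|hno] := classic (exists J, List.In J Js /\ star (isum I J) <> DD).
- have hJ := hJs J inJ.
  have [rest hperm] := in_perm inJ.
  have hrest : allh rest.
    by move=> R hR; apply: hJs; apply: Permutation_in (Permutation_sym hperm) _; right.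
  have [hJr hpr] := pw_perm comax_sym hperm hpw.
  have [hP hMP] := prod_homog Hstar Hfc hI hJ hne.
  have hMM := noncomax_eq Hstar Hfc hI hJ hne.
  exists (star (iprod I J) :: rest); split => //.
  + by move=> R [<-|hR]; [|apply: hrest].
  + split => // R hR; apply: NNPP => hc.
    have hR' := hrest R hR.
    have e := noncomax_eq Hstar Hfc hP hR' hc.
    apply: (sub_M_noncomax Hstar Hfc hJ hR') (hJr R hR).
    by rewrite -hMM -hMP e; apply: Mset_sub.
  + have iI := homog_iid hI; have iJ := homog_iid hJ; have ir := iprodl_iid hrest.
    rewrite /= (starM_l Hstar (iprod_iid iI iJ) ir) iprodA.
    by rewrite (iprodl_perm hperm).
- exists (I :: Js); split => //.
  + by move=> R [<-|hR]; [|apply: hJs].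
  + split => // J hJ; apply: NNPP => hc; apply: hno; exists J; split => //.
Qed.

Lemma existence Is : allh Is ->
  exists Js, [/\ allh Js, pw comax Js & star (iprodl Js) = star (iprodl Is)].
Proof.
elim: Is => [|I Is IH] hIs; first by exists [::].
have hI := hIs I (or_introl erefl).
have [Js0 [h1 h2 h3]] := IH (fun J hJ => hIs J (or_intror hJ)).
have [Js [k1 k2 k3]] := exist_step hI h1 h2.
exists Js; split => //; rewrite k3 /=.
have iI := homog_iid hI.
rewrite -(starM_r Hstar iI (iprodl_iid h1)) h3.
by rewrite (starM_r Hstar iI (iprodl_iid (fun J hJ => hIs J (or_intror hJ)))).
Qed.


Definition Cset (M A : kset) : kset :=
  fun x => Dset x /\ exists y, [/\ Dset y, ~ M y & A (x * y)].

Lemma prod_notM J rest : homog J -> allh rest -> (forall R, List.In R rest -> comax J R) ->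
  exists y, [/\ iprodl rest y, Dset y & ~ Mset star J y].
Proof.
move=> hJ; elim: rest => [|R rest IH] hr hc.
  exists 1; split; [exact: Dset1|exact: Dset1|exact: Mset_ne1].
have hR := hr R (or_introl erefl); have iR := homog_iid hR.
have nsub : ~ ksubset R (Mset star J).
  by move=> hs; apply: (sub_M_noncomax Hstar Hfc hJ hR hs); apply: hc; left.
have [r [hrR hnr]] : exists r, R r /\ ~ Mset star J r.
  apply: NNPP => hn; apply: nsub => r hrr; apply: NNPP => hm; apply: hn; exists r; split => //.
have [p [hp pD hnp]] := IH (fun J hJ => hr J (or_intror hJ)) (fun J hJ => hc J (or_intror hJ)).
have rD : Dset r by case: iR => _ h _; apply: h.
exists (r * p); split.
- by apply: iprod_in.
- exact: DsetM.
- by move=> /(Mset_prime Hstar hJ rD pD) [].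
Qed.

Lemma charJ J rest : homog J -> allh rest -> (forall R, List.In R rest -> comax J R) ->
  J = Cset (Mset star J) (star (iprod J (iprodl rest))).
Proof.
move=> hJ hr hc; have iJ := homog_iid hJ; have ir := iprodl_iid hr.
have iP := iprod_iid iJ ir.
have AJ : ksubset (star (iprod J (iprodl rest))) J.
  apply: (star_min Hstar iP iJ (homog_star hJ)); apply: iprod_subl; [by case: iJ|by case: ir].
case: (iJ) => sJ intJ _.
apply: kext => x; split.
- move=> hx; split; first exact: intJ.
  have [y [hy yD hny]] := prod_notM hJ hr hc.
  by exists y; split => //; apply: (star_ext Hstar iP); apply: iprod_in.
- move=> [xD [y [yD hny /AJ hxy]]].
  have hX : star (isum J (principal y)) = DD by apply: NNPP => h; apply: hny.
  have [/eqP ->|nx] := boolP (x == 0); first exact: sm0.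
  have iX := isum_iid iJ (principal_smi yD).
  have ipx : iid (principal x).
    by case: (principal_smi xD) => h1 h2; split => //; exists x; split => //; exists 1; rewrite rmorph1 mul1r.
  have := @starM_sub _ _ Hstar _ _ ipx iX (x * 1).
  rewrite mulr1 => h; apply: (star_min Hstar (iprod_iid ipx iX) iJ (homog_star hJ)).
    apply: iprod_ind; [exact: sm0|exact: smD|].
    move=> u v [a ->] [j [q [hj [c ->] ->]]].
    have -> : emb a * x * (j + emb c * y) = emb a * (x * j + emb c * (x * y)) by ring.
    apply: smM => //; first exact: DsetE.
    by apply: smD => //; apply: smM => //; apply: DsetE.
  apply: h; rewrite -[x]mulr1; apply: iprod_in.
    by exists 1; rewrite rmorph1 mul1r mulr1.
  by rewrite hX; apply: Dset1.
Qed.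

Lemma prod_in_M J Ks : homog J -> allh Ks -> ksubset (iprodl Ks) (Mset star J) ->
  exists K, List.In K Ks /\ ksubset K (Mset star J).
Proof.
move=> hJ; elim: Ks => [|K Ks IH] hK hs.
  by exfalso; apply: (Mset_ne1 Hstar hJ); apply: hs; apply: Dset1.
have [hKM|hKM] := classic (ksubset K (Mset star J)); first by exists K; split => //; left.
have [k [hk hnk]] : exists k, K k /\ ~ Mset star J k.
  apply: NNPP => hn; apply: hKM => k hkk; apply: NNPP => hm; apply: hn; exists k; split => //.
have hKs : allh Ks by move=> I hI; apply: hK; right.
have kD : Dset k by case: (homog_iid (hK K (or_introl erefl))) => _ h _; apply: h.
have [K' [hK' hs']] : exists K', List.In K' Ks /\ ksubset K' (Mset star J).
  apply: IH => // p hp.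
  have pD : Dset p by case: (iprodl_iid hKs) => _ h _; apply: h.
  have := hs (k * p) (iprod_in hk hp).
  by move=> /(Mset_prime Hstar hJ kD pD) [].
by exists K'; split => //; right.
Qed.

Lemma uniq_in Js Ks : allh Js -> pw comax Js -> allh Ks -> pw comax Ks ->
  star (iprodl Js) = star (iprodl Ks) -> forall J, List.In J Js -> List.In J Ks.
Proof.
move=> hJs pJs hKs pKs e J inJ.
have hJ := hJs J inJ; have iJ := homog_iid hJ.
have [rest hperm] := in_perm inJ.
have hrest : allh rest.
  by move=> R hR; apply: hJs; apply: Permutation_in (Permutation_sym hperm) _; right.
have [hJr _] := pw_perm comax_sym hperm pJs.
have eA : star (iprodl Js) = star (iprod J (iprodl rest)) by rewrite (iprodl_perm hperm).
have ir := iprodl_iid hrest; have iP := iprod_iid iJ ir.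
have AJ : ksubset (star (iprod J (iprodl rest))) J.
  apply: (star_min Hstar iP iJ (homog_star hJ)); apply: iprod_subl; [by case: iJ|by case: ir].
have [K [inK KM]] : exists K, List.In K Ks /\ ksubset K (Mset star J).
  apply: prod_in_M => // y hy; apply: (Mset_sub Hstar hJ); apply: AJ; rewrite -eA e.
  by apply: (star_ext Hstar (iprodl_iid hKs)).
have hK := hKs K inK.
have eM := Mset_eq Hstar Hfc hK hJ KM.
have [restK hpermK] := in_perm inK.
have hrestK : allh restK.
  by move=> R hR; apply: hKs; apply: Permutation_in (Permutation_sym hpermK) _; right.
have [hKr _] := pw_perm comax_sym hpermK pKs.
have eB : star (iprodl Ks) = star (iprod K (iprodl restK)) by rewrite (iprodl_perm hpermK).
have e1 := charJ hJ hrest hJr; have e2 := charJ hK hrestK hKr.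
suff -> : J = K by [].
apply: etrans e1 _; apply: esym; apply: etrans e2 _.
by rewrite eM -eB -e eA.
Qed.

End Main.

Theorem propositionK (D : idomainType) (star : kset D -> kset D)
  (Hstar : star_op star) (Hfc : finite_character star)
  (A : kset D) (Is : seq (kset D))
  (HIs : forall I, List.In I Is -> star_homog star I)
  (HA : A = star (iprodl Is)) :
  exists Js : seq (kset D),
    [/\ (forall J, List.In J Js -> star_homog star J),
        mutually_comax star Js,
        A = star (iprodl Js) &
        forall Ks : seq (kset D),
          (forall K, List.In K Ks -> star_homog star K) ->
          mutually_comax star Ks ->
          A = star (iprodl Ks) ->
          Permutation Js Ks].
Proof.
have [Js [h1 h2 h3]] := existence Hstar Hfc HIs.
have csym := @comax_sym D star.
exists Js; split => //.
- exact: (proj1 (pw_nth csym (@Dset D) Js) h2).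
- by rewrite HA h3.
move=> Ks hKs mK eK.
have pK : pw (star_comax star) Ks := proj2 (pw_nth csym (@Dset D) Ks) mK.
have e : star (iprodl Js) = star (iprodl Ks) by rewrite h3 -HA eK.
apply: NoDup_Permutation.
- apply: (pw_nodup (R := star_comax star)) h2 => J hJ.
  by apply: (homog_not_self Hstar); apply: h1.
- apply: (pw_nodup (R := star_comax star)) pK => J hJ.
  by apply: (homog_not_self Hstar); apply: hKs.
- move=> J; split.
  + exact: (uniq_in Hstar Hfc h1 h2 hKs pK e).
  + exact: (uniq_in Hstar Hfc hKs pK h1 h2 (esym e)).
Qed.
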